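(* For integers $0\le k\le n-1$ and $\lambda\in\mathbb C$, \[ d^k_n(\lambda)=n\,d^k_{n-1}(\lambda)+(\lambda-1)\,d^{k-1}_{n-2}(\lambda), \] where for $k=0$ the convention $d^{-1}_m(\lambda)=(\lambda-1)^{m+1}$ (for $m\ge -1$) is used.
   Context: For $\lambda\in\mathbb C$ and integers $0\le k\le n$, define $e^k_n(\lambda)$ by $e^n_n(\lambda)=n!$ and, for $1\le k\le n$, $e^{k-1}_n(\lambda)=e^k_n(\lambda)+(\lambda-1)e^{k-1}_{n-1}(\lambda)$. Put $d^k_n(\lambda)=e^k_n(\lambda)/k!$. (For nonnegative integer $\lambda$, $d^k_n(\lambda)$ counts permutations of $[n]$ whose first $k$ entries are decreasing, where each fixed point among the last $n-k$ positions is given one of $\lambda$ colours.) *)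

(* Defs.v *)
(* The complex numbers are modelled as [complex R] = R[i]
   for an arbitrary [R : realType] (mathcomp-real-closed's complex). *)
From mathcomp Require Import all_boot all_order all_algebra.
From mathcomp Require Import reals zify.
From mathcomp Require Export complex.
Set Implicit Arguments. Unset Strict Implicit. Unset Printing Implicit Defensive.
Import Order.TTheory GRing.Theory Num.Theory.
Local Open Scope ring_scope.

(* ecol l n k = e^k_n(l) for 0 <= k <= n, computed by the defining recursion
   e^n_n = n!,  e^{k-1}_n = e^k_n + (l-1) e^{k-1}_{n-1}.
   For fixed n, the inner fixpoint g j computes e^{n-j}_n.
   Values for k > n are junk (never used). *)
Fixpoint ecol (C : nzRingType) (l : C) (n : nat) : nat -> C :=
  match n with
  | 0 => fun _ => 1
  | n'.+1 =>
      let p := ecol l n' in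
      fun k =>
        (fix g (j : nat) : C :=
           match j with
           | 0 => (n'.+1)`!%:R
           | j'.+1 => g j' + (l - 1) * p (n'.+1 - j'.+1)%N
           end) (n'.+1 - k)%N
  end.

Definition e_ (C : nzRingType) (l : C) (k n : nat) : C := ecol l n k.

Definition d_ (C : fieldType) (l : C) (k n : nat) : C := e_ l k n / (k`!)%:R.

Lemma e_nn (C : nzRingType) (l : C) n : e_ l n n = (n`!)%:R.
Proof. by case: n => [|n] //=; rewrite /e_ /= subnn. Qed.

Lemma e_rec (C : nzRingType) (l : C) n k : (1 <= k <= n)%N ->
  e_ l k.-1 n = e_ l k n + (l - 1) * e_ l k.-1 n.-1.
Proof.
case: n => [|n] /andP [k1 kn]; first by case: k k1 kn.
rewrite /e_ /=.
have -> : (n.+1 - k.-1 = (n.+1 - k).+1)%N by case: k k1 kn => // k _ kn /=; rewrite subSn.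
have -> : (n.+1 - (n.+1 - k).+1 = k.-1)%N by lia.
by [].
Qed.

(* Main.v *)
Require Import Defs.
From mathcomp Require Import all_boot all_order all_algebra.
From mathcomp Require Import reals complex.
From mathcomp Require Import ring zify.
Import GRing.Theory Num.Theory.
Local Open Scope ring_scope.

Lemma erec' (C : fieldType) (l : C) n k : (k < n)%N ->
  e_ l k n = e_ l k.+1 n + (l - 1) * e_ l k n.-1.
Proof. move=> h; have := @e_rec C l n k.+1; apply; lia. Qed.

Definition Q (C : fieldType) (l : C) n k :=
  e_ l k n.+1 = n.+1%:R * e_ l k n + (l - 1) *
    (match k with 0 => (l - 1) ^+ n | k'.+1 => k%:R * e_ l k' n.-1 end).

Arguments Q {C}.
Lemma main_e (C : fieldType) (l : C) n : forall k, (k <= n)%N -> Q l n k.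
Proof.
elim: n => [|m IH].
  case=> // _. rewrite /Q (@erec' _ l 1 0) // e_nn.
  by rewrite /e_ /= (_ : 1`! = 1)%N //; ring.
have Hj : forall j, (j <= m.+1)%N -> Q l m.+1 (m.+1 - j).
  elim=> [_|j IHj hj].
    rewrite subn0 /Q (@erec' _ l (m.+2) (m.+1)) // !e_nn.
    case: m IH => [|m'] IH.
      by rewrite /e_ /= !factS fact0 !natrM; ring.
    by rewrite !factS !natrM; ring.
  have hk : (m.+1 - j = (m.+1 - j.+1).+1)%N by lia.
  move: (IHj (ltnW hj)); rewrite hk.
  move: (m.+1 - j.+1)%N hj hk => k hj hk.
  rewrite /Q => Pk.
  rewrite (@erec' _ l (m.+2) (k)); last by lia.
  rewrite Pk.
  have r1 := @erec' _ l (m.+1) (k) ltac:(lia).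
  have Ih := IH k ltac:(lia). rewrite /Q in Ih.
  change (m.+1.-1) with m in *; change (m.+2.-1) with m.+1 in *.
  have r1' : e_ l k.+1 m.+1 = e_ l k m.+1 - (l - 1) * e_ l k m by rewrite r1; ring.
  rewrite r1' Ih.
  have hkm : (k <= m)%N by lia.
  case: k {Pk r1 r1' Ih hk hj} hkm => [|k'] hkm.
    by rewrite !exprS; ring.
  have r2 := @erec' _ l (m) (k') ltac:(lia).
  rewrite r2; ring.
move=> k hk.
have := Hj (m.+1 - k)%N ltac:(lia).
by rewrite subKn.
Qed.

Theorem mainTheorem5 (R : realType) (l : complex R) (n k : nat) :
  (k <= n.-1)%N -> (0 < n)%N ->
  d_ l k n =
    n%:R * d_ l k n.-1
    + (l - 1) * (match k with
                 | 0 => (l - 1) ^+ n.-1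
                 | k'.+1 => d_ l k' n.-2
                 end).
Proof.
case: n => // n /= hk _.
rewrite /d_ (@main_e _ l n k hk).
case: k hk => [|k] hk.
  by rewrite fact0 !divr1.
rewrite factS natrM invfM.
have h1 : (k.+1%:R : complex R) != 0 by rewrite pnatr_eq0.
have h2 : ((k`!)%:R : complex R) != 0 by rewrite pnatr_eq0 -lt0n fact_gt0.
field.
apply/andP; split; [exact: h2 | by rewrite -mulrS].
Qed.
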